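(* Let $n',n''\ge 0$ be integers, $n=n'+n''$, and consider the system $\dot x=f(x)$ on $\mathbb{R}^n$ with $x=(x';x'')$, $x'\in\mathbb{R}^{n'}$, $x''\in\mathbb{R}^{n''}$, of the form $$\dot x'(t)=A'x'(t)+D,\qquad \dot x''(t)=A''x''(t)+g(x'(t)),$$ where $A'\in\mathbb{R}^{n'\times n'}$ and $A''\in\mathbb{R}^{n''\times n''}$ are constant matrices, $D\in\mathbb{R}^{n'}$ is a constant vector, and $g:\mathbb{R}^{n'}\to\mathbb{R}^{n''}$ is a polynomial map. Then this system (i.e., the vector field $f(x)=(A'x'+D;\,A''x''+g(x'))$) is super-linearizable.
   Context: Super-linearization: let $\Pi:\mathbb{R}^{n+m}\to\mathbb{R}^n$ be the projection $\Pi(z)=(z_1,\ldots,z_n)$. A vector field $f:\mathbb{R}^n\to\mathbb{R}^n$ is super-linearizable if there exist an integer $m\ge 0$, a matrix $A\in\mathbb{R}^{(n+m)\times(n+m)}$, a vector $D\in\mathbb{R}^{n+m}$ and an injective map $p:\mathbb{R}^n\to\mathbb{R}^m$ (the observables) such that for all $x_0\in\mathbb{R}^n$ and all $t$, $\Pi\big(e^{t(Az+D)}z_0\big)=e^{tf}x_0$ where $z_0=(x_0,p(x_0))$. Here $e^{tg}y_0$ denotes the solution at time $t$ of $\dot y=g(y)$ with initial state $y_0$. *)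

(* Defs.v *)
From HB Require Import structures.
From mathcomp Require Import all_boot all_order all_algebra.
From mathcomp Require Import all_classical all_reals all_analysis.
From mathcomp Require mpoly.
Set Implicit Arguments. Unset Strict Implicit. Unset Printing Implicit Defensive.
Import Order.TTheory GRing.Theory Num.Theory.
Import numFieldNormedType.Exports.
Local Open Scope ring_scope.

Definition is_solution (R : realType) (k : nat) (F : 'cV[R]_k -> 'cV[R]_k)
  (y0 : 'cV[R]_k) (y : R -> 'cV[R]_k) : Prop :=
  y 0 = y0 /\ forall t : R, is_derive t (1 : R) y (F (y t)).

(* "e^{tf} x0 = w t for all t": the flow of f from x0 is the curve w, i.e.
   w solves the ODE with initial state x0 and it is the (unique) solution. *)
Definition is_flow (R : realType) (k : nat) (F : 'cV[R]_k -> 'cV[R]_k)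
  (x0 : 'cV[R]_k) (w : R -> 'cV[R]_k) : Prop :=
  is_solution F x0 w /\
  forall y : R -> 'cV[R]_k, is_solution F x0 y -> forall t, y t = w t.

(* Super-linearization (the projection Pi keeps the first n coordinates). *)
Definition super_linearizable (R : realType) (n : nat)
  (f : 'cV[R]_n -> 'cV[R]_n) : Prop :=
  exists (m : nat) (A : 'M[R]_(n + m)) (D : 'cV[R]_(n + m))
         (p : 'cV[R]_n -> 'cV[R]_m),
    injective p /\
    forall x0 : 'cV[R]_n,
      exists z : R -> 'cV[R]_(n + m),
        is_flow (fun w => A *m w + D) (col_mx x0 (p x0)) z /\
        is_flow f x0 (fun t => usubmx (z t)).

Definition polynomial_map (R : realType) (a b : nat)
  (g : 'cV[R]_a -> 'cV[R]_b) : Prop :=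
  exists P : 'I_b -> mpoly.mpoly a R,
    forall (x : 'cV[R]_a) (i : 'I_b),
      g x i 0 = mpoly.meval (fun j => x j 0) (P i).

(* Main.v *)
Require Import Defs.
From HB Require Import structures.
From mathcomp Require Import all_boot all_order all_algebra.
From mathcomp Require Import all_classical all_reals all_analysis.
From mathcomp Require mpoly.
From mathcomp Require Import ring lra.
Import Order.TTheory GRing.Theory Num.Theory.
Import numFieldNormedType.Exports.
Local Open Scope ring_scope.

Section S.
Variable R : realType.
Local Open Scope classical_set_scope.
Local Set Implicit Arguments. Local Unset Strict Implicit.

Lemma is_derive_cV k (f : R -> 'cV[R]_k) (t : R) (df : 'cV[R]_k) :
  is_derive t (1:R) f df <-> forall i, is_derive t (1:R) (fun s => f s i 0) (df i 0).
Proof.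
split.
- move=> H i.
  have dv : derivable f t 1 by case: H.
  have := (derivable_mxP f t 1).1 dv i 0 => di.
  apply: DeriveDef => //.
  have E := derive_mx dv.
  have := congr1 (fun M : 'cV[R]_k => M i 0) E; rewrite /= mxE => <-.
  by rewrite derive_val.
- move=> H.
  have dv : derivable f t 1.
    apply/derivable_mxP => i j; rewrite (ord1 j); by case: (H i).
  apply: DeriveDef => //.
  rewrite derive_mx //; apply/matrixP => i j; rewrite mxE (ord1 j).
  by rewrite derive_val.
Qed.


Lemma is_derive_col a b (f : R -> 'cV[R]_a) (g : R -> 'cV[R]_b) (t : R) df dg :
  is_derive t (1:R) f df -> is_derive t (1:R) g dg ->
  is_derive t (1:R) (fun s => col_mx (f s) (g s)) (col_mx df dg).
Proof.
move=> /is_derive_cV Hf /is_derive_cV Hg; apply/is_derive_cV => i.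
case: (split_ordP i) => j ->.
- have -> : (fun s => col_mx (f s) (g s) (lshift b j) 0) = (fun s => f s j 0).
    by apply/funext => s; rewrite col_mxEu.
  by rewrite col_mxEu.
- have -> : (fun s => col_mx (f s) (g s) (rshift a j) 0) = (fun s => g s j 0).
    by apply/funext => s; rewrite col_mxEd.
  by rewrite col_mxEd.
Qed.

Lemma is_derive_usub a b (z : R -> 'cV[R]_(a + b)) (t : R) dz :
  is_derive t (1:R) z dz -> is_derive t (1:R) (fun s => usubmx (z s)) (usubmx dz).
Proof.
move=> /is_derive_cV H; apply/is_derive_cV => i.
have -> : (fun s => usubmx (z s) i 0) = (fun s => z s (lshift b i) 0).
  by apply/funext => s; rewrite mxE.
by rewrite mxE.
Qed.

Lemma is_derive_dsub a b (z : R -> 'cV[R]_(a + b)) (t : R) dz :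
  is_derive t (1:R) z dz -> is_derive t (1:R) (fun s => dsubmx (z s)) (dsubmx dz).
Proof.
move=> /is_derive_cV H; apply/is_derive_cV => i.
have -> : (fun s => dsubmx (z s) i 0) = (fun s => z s (rshift a i) 0).
  by apply/funext => s; rewrite mxE.
by rewrite mxE.
Qed.

Lemma is_derive_mul k l (M : 'M[R]_(k, l)) (f : R -> 'cV[R]_l) (t : R) df :
  is_derive t (1:R) f df -> is_derive t (1:R) (fun s => M *m f s) (M *m df).
Proof.
move=> /is_derive_cV H; apply/is_derive_cV => i.
have -> : (fun s => (M *m f s) i 0) = \sum_(j < l) (fun s => M i j *: f s j 0).
  by apply/funext => s; rewrite mxE fct_sumE.
rewrite mxE; apply: is_derive_sum => j; exact: is_deriveZ.
Qed.


Lemma derive_cont (f df : R -> R) :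
  (forall s, is_derive s (1:R) f (df s)) -> continuous f.
Proof.
move=> H x; apply/differentiable_continuous/derivable1_diffP.
by case: (H x).
Qed.

Lemma gronwall0 (phi dphi : R -> R) (c : R) :
  (forall s, is_derive s (1:R) phi (dphi s)) -> (forall s, 0 <= phi s) ->
  (forall s, `|dphi s| <= c * phi s) -> phi 0 = 0 -> forall t, phi t = 0.
Proof.
move=> Hd H0 Hb Hphi0 t; apply/eqP; rewrite eq_le H0 andbT.
have dlin : forall (k : R) s, is_derive s (1:R) (fun s => k * s) k.
  move=> k s; have h := is_deriveZ k (is_derive_id s (1:R)).
  move: h; rewrite scaler1 => h; exact: h.
have dexp : forall (k : R) s, is_derive s (1:R) (fun s => expR (k * s)) (expR (k * s) * k).
  move=> k s; exact: (@is_derive1_comp _ expR (fun s => k * s) s _ _ (is_derive_expR _) (dlin k s)).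
have dpsi : forall (k : R) s, is_derive s (1:R) (fun s => expR (k * s) * phi s)
    (expR (k * s) * (dphi s + k * phi s)).
  move=> k s; have h := is_deriveM (dexp k s) (Hd s).
  have -> : (fun s0 => expR (k * s0) * phi s0) = (fun s => expR (k * s)) * phi.
    by apply/funext.
  apply: is_derive_eq h _.
  change (expR (k * s) * dphi s + phi s * (expR (k * s) * k) = expR (k * s) * (dphi s + k * phi s)).
  ring.
have cpsi : forall k : R, continuous (fun s : R => expR (k * s) * phi s).
  by move=> k; apply: (derive_cont (dpsi k)).
case: (leP 0 t) => ht.
- have [x _ E] := MVT_segment ht (fun x _ => dpsi (- c) x) (continuous_subspaceT (cpsi (- c))).
  move: E; rewrite mulr0 expR0 mul1r Hphi0 subr0 => E.
  have : expR (- c * t) * phi t <= 0.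
    rewrite E mulr_le0_ge0 //.
    rewrite pmulr_rle0 ?expR_gt0 // mulNr subr_le0.
    exact: le_trans (ler_norm _) (Hb x).
  by rewrite subr0.
  by move=> h; rewrite -(pmulr_rle0 _ (expR_gt0 (- c * t))).
- have ht' : t <= 0 by rewrite ltW.
  have [x _ E] := MVT_segment ht' (fun x _ => dpsi c x) (continuous_subspaceT (cpsi c)).
  move: E; rewrite mulr0 expR0 mul1r Hphi0 sub0r => E.
  have : 0 <= - (expR (c * t) * phi t).
    rewrite E; apply: mulr_ge0; last by rewrite sub0r oppr_ge0 ltW.
    rewrite mulr_ge0 ?expR_ge0 // -lerBlDr sub0r.
    by rewrite lerNl (le_trans _ (Hb x)) // -normrN ler_norm.
  by move=> h; rewrite -(pmulr_rle0 _ (expR_gt0 (c * t))) -oppr_ge0.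
Qed.

Lemma normM_le_sq (a b : R) : `|a * b| <= a ^+ 2 + b ^+ 2.
Proof.
rewrite ler_norml; apply/andP; split; nra.
Qed.

Lemma sq_le_sum k (v : 'I_k -> R) i : v i ^+ 2 <= \sum_j v j ^+ 2.
Proof.
rewrite (bigD1 i) //= lerDl; apply: sumr_ge0 => j _; exact: sqr_ge0.
Qed.

Lemma lin_uniq0 k (M : 'M[R]_k) (u : R -> 'cV[R]_k) :
  (forall t, is_derive t (1:R) u (M *m u t)) -> u 0 = 0 -> forall t, u t = 0.
Proof.
move=> Hd H0.
pose phi (s : R) := \sum_i (u s i 0) ^+ 2.
pose dphi (s : R) := \sum_i (2%:R * u s i 0 ^+ 1) *: (M *m u s) i 0.
have Hi : forall i t, is_derive t (1:R) (fun s => u s i 0) ((M *m u t) i 0).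
  by move=> i t; move: (Hd t) => /is_derive_cV; apply.
have Dphi : forall t, is_derive t (1:R) phi (dphi t).
  move=> t.
  have -> : phi = \sum_i (fun s => u s i 0) ^+ 2.
    by apply/funext => s; rewrite fct_sumE /phi; apply: eq_bigr => i _; rewrite exprfctE.
  apply: is_derive_sum => i; exact: is_deriveX.
pose c := \sum_i \sum_j 4%:R * `|M i j|.
have Hb : forall s, `|dphi s| <= c * phi s.
  move=> s.
  have -> : dphi s = \sum_i \sum_j 2%:R * (M i j * (u s i 0 * u s j 0)).
    rewrite /dphi; apply: eq_bigr => i _; rewrite mxE.
    rewrite /GRing.scale /= mulr_sumr; apply: eq_bigr => j _.
    rewrite expr1; ring.
  rewrite /c mulr_suml; apply: (le_trans (ler_norm_sum _ _ _)).
  apply: ler_sum => i _; rewrite mulr_suml.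
  apply: (le_trans (ler_norm_sum _ _ _)); apply: ler_sum => j _.
  rewrite normrM normrM ger0_norm //.
  have h1 := normM_le_sq (u s i 0) (u s j 0).
  have h2 := sq_le_sum (fun i => u s i 0) i.
  have h3 := sq_le_sum (fun i => u s i 0) j.
  rewrite /phi.
  have hM := normr_ge0 (M i j).
  set P := \sum_j0 _ in h2 h3 *.
  set m := `|M i j| in hM *.
  set w := `|_| in h1 *.
  have : m * w <= m * (2%:R * P) by apply: ler_wpM2l => //; lra.
  move=> h; have -> : 4%:R * m * P = 2%:R * (m * (2%:R * P)) by ring.
  by rewrite ler_pM2l.
have Hphi := gronwall0 Dphi (fun s => sumr_ge0 _ (fun i _ => sqr_ge0 (u s i 0))) Hb.
have P0 : phi 0 = 0 by rewrite /phi H0; apply: big1 => i _; rewrite mxE expr0n.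
move=> t; apply/matrixP => i j; rewrite (ord1 j) mxE.
have := Hphi P0 t; rewrite /phi => /psumr_eq0P => /(_ (fun i _ => sqr_ge0 _) i isT).
by move/eqP; rewrite sqrf_eq0 => /eqP.
Qed.

Lemma cvg_finsum k (u : 'I_k -> nat -> R) (l : 'I_k -> R) :
  (forall i, u i @ \oo --> l i) -> (fun n => \sum_i u i n) @ \oo --> \sum_i l i.
Proof.
elim: k u l => [|k IH] u l H.
  rewrite big_ord0; under eq_fun do rewrite big_ord0; exact: cvg_cst.
rewrite big_ord_recr /=; under eq_fun do rewrite big_ord_recr /=.
apply: cvgD; last exact: H.
exact: (IH (fun i => u (widen_ord (leqnSn k) i)) (fun i => l (widen_ord (leqnSn k) i))).
Qed.

Section Exist.
Variables (k : nat) (M : 'M[R]_k) (v0 : 'cV[R]_k).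

Definition ecoef (r : nat) (a : 'I_k) (i : nat) : R :=
  (M ^+ (i + r) *m v0) a 0 / i`!%:R.

Lemma ecoef_diffs r a : pseries_diffs (ecoef r a) = ecoef r.+1 a.
Proof.
apply/funext => i; rewrite /pseries_diffs /ecoef addSnnS factS natrM.
set X := (_ *m _) a 0.
have h1 : (i.+1)%:R != 0 :> R by rewrite pnatr_eq0.
have h2 : (i`!)%:R != 0 :> R by rewrite pnatr_eq0 -lt0n fact_gt0.
by rewrite invfM mulrCA mulVKf.
Qed.

Let B := \sum_a `|v0 a 0|.
Let N := 1 + \sum_i \sum_j `|M i j|.

Lemma N_ge1 : 1 <= N.
Proof. by rewrite /N lerDl; apply: sumr_ge0 => i _; apply: sumr_ge0 => j _. Qed.

Lemma B_ge0 : 0 <= B.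
Proof. by apply: sumr_ge0. Qed.

Lemma pow_bound j a : `|(M ^+ j *m v0) a 0| <= B * N ^+ j.
Proof.
elim: j a => [|j IH] a.
  by rewrite expr0 mul1mx expr0 mulr1 /B (bigD1 a) //= lerDl sumr_ge0.
rewrite exprS -mulmxA mxE.
apply: (le_trans (ler_norm_sum _ _ _)).
apply: (@le_trans _ _ (\sum_l `|M a l| * (B * N ^+ j))).
  apply: ler_sum => l _; rewrite normrM; apply: ler_wpM2l => //.
rewrite -mulr_suml exprS.
have -> : B * (N * N ^+ j) = N * (B * N ^+ j) by ring.
apply: ler_wpM2r; first by rewrite mulr_ge0 ?B_ge0 // exprn_ge0 // (le_trans ler01 N_ge1).
rewrite /N [X in _ <= 1 + X](bigD1 a) //= addrCA lerDl addr_ge0 //.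
by apply: sumr_ge0 => i _; apply: sumr_ge0.
Qed.

Lemma ecoef_cvg r a x : cvgn (pseries (ecoef r a) x).
Proof.
apply: normed_cvg.
have N0 : 0 <= N by exact: le_trans ler01 N_ge1.
apply: (@series_le_cvg _ _ ((B * N ^+ r) *: exp_coeff (N * `|x|))).
- by move=> n /=.
- move=> n; rewrite /exp_coeff /= /GRing.scale /=.
  by rewrite !mulr_ge0 ?B_ge0 ?exprn_ge0 ?invr_ge0 // mulr_ge0.
- move=> n; rewrite /exp_coeff /= /GRing.scale /= /ecoef.
  rewrite normrM normrM normfV normr_nat normrX.
  have := pow_bound (n + r) a; rewrite exprD => hb.
  rewrite exprMn.
  have hf : 0 <= (n`!%:R : R)^-1 by rewrite invr_ge0.
  have hx : 0 <= `|x| ^+ n by rewrite exprn_ge0.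
  set P := `|_| in hb *.
  rewrite -[X in _ <= X]/((B * N ^+ r) * (N ^+ n * `|x| ^+ n / n`!%:R)).
  have -> : B * N ^+ r * (N ^+ n * `|x| ^+ n / n`!%:R) =
            (B * (N ^+ n * N ^+ r)) * (n`!%:R)^-1 * `|x| ^+ n by ring.
  apply: ler_wpM2r => //; apply: ler_wpM2r => //.
  by rewrite -exprD.
- exact: (@is_cvg_seriesZ R (exp_coeff (N * `|x|)) (B * N ^+ r) (is_cvg_series_exp_coeff _)).
Qed.

Lemma ecoef_derive r a x :
  is_derive x (1:R) (fun x => limn (pseries (ecoef r a) x)) (limn (pseries (ecoef r.+1 a) x)).
Proof.
rewrite -ecoef_diffs; apply: (@pseries_snd_diffs _ _ (`|x| + 1)).
- exact: ecoef_cvg.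
- rewrite ecoef_diffs; exact: ecoef_cvg.
- rewrite !ecoef_diffs; exact: ecoef_cvg.
- have h : 0 <= `|x| + 1 by rewrite addr_ge0.
  by rewrite (ger0_norm h) ltrDl.
Qed.

Lemma ecoefS r a i : ecoef r.+1 a i = \sum_l M a l * ecoef r l i.
Proof.
rewrite /ecoef addnS exprS -mulmxA mxE mulr_suml; apply: eq_bigr => l _.
by rewrite mulrA.
Qed.

Lemma ecoef_lim r a x :
  limn (pseries (ecoef r.+1 a) x) = \sum_l M a l * limn (pseries (ecoef r l) x).
Proof.
apply: cvg_lim => //.
have -> : pseries (ecoef r.+1 a) x = (fun n => \sum_l M a l * pseries (ecoef r l) x n).
  apply/funext => n; rewrite /pseries /series /=.
  under eq_bigr do rewrite ecoefS mulr_suml.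
  rewrite exchange_big /=; apply: eq_bigr => l _.
  by rewrite mulr_sumr; apply: eq_bigr => i _; rewrite mulrA.
apply: cvg_finsum => l.
apply: cvgM; first exact: cvg_cst.
exact: ecoef_cvg.
Qed.

Lemma pseries0 (c : nat -> R) : limn (pseries c 0) = c 0%N.
Proof.
apply: lim_near_cst => //; near=> n.
rewrite /pseries /series /=.
have n0 : (0 < n)%N by near: n; exists 1%N.
rewrite -(prednK n0).
rewrite big_nat_recl // expr0 mulr1 big1 ?addr0 // => i _.
by rewrite expr0n mulr0.
Unshelve. all: by end_near.
Qed.

Lemma lin_exist : exists z : R -> 'cV[R]_k,
  z 0 = v0 /\ forall t, is_derive t (1:R) z (M *m z t).
Proof.
exists (fun t => \col_a limn (pseries (ecoef 0 a) t)); split.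
  apply/matrixP => a j; rewrite (ord1 j) mxE pseries0 /ecoef add0n expr0 mul1mx.
  by rewrite fact0 invr1 mulr1.
move=> t; apply/is_derive_cV => a.
have -> : (fun s => (\col_a limn (pseries (ecoef 0 a) s)) a 0) =
    (fun s => limn (pseries (ecoef 0 a) s)).
  by apply/funext => s; rewrite mxE.
apply: is_derive_eq; first exact: ecoef_derive.
rewrite ecoef_lim mxE; apply: eq_bigr => l _; by rewrite mxE.
Qed.

End Exist.

Lemma is_derive_prod d (u : 'I_d -> R -> R) (du : 'I_d -> R) (t : R) :
  (forall i, is_derive t (1:R) (u i) (du i)) ->
  is_derive t (1:R) (fun s => \prod_i u i s)
    (\sum_i \prod_j (if j == i then du j else u j t)).
Proof.
elim: d u du => [|d IH] u du H.
  rewrite big_ord0; under eq_fun do rewrite big_ord0.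
  exact: is_derive_cst.
have hw : forall i j : 'I_d, (widen_ord (leqnSn d) j == widen_ord (leqnSn d) i) = (j == i).
  by move=> i j; rewrite -val_eqE /= val_eqE.
have hm : forall i : 'I_d, (ord_max == widen_ord (leqnSn d) i) = false.
  by move=> i; apply/negbTE; rewrite -val_eqE /= neq_ltn ltn_ord orbT.
have hm' : forall i : 'I_d, (widen_ord (leqnSn d) i == ord_max) = false.
  by move=> i; rewrite eq_sym hm.
have -> : (fun s => \prod_i u i s) =
   (fun s => \prod_(i < d) u (widen_ord (leqnSn d) i) s) * u ord_max.
  by apply/funext => s; rewrite big_ord_recr.
have h := is_deriveM (IH (fun i => u (widen_ord (leqnSn d) i)) (fun i => du (widen_ord (leqnSn d) i)) (fun i => H (widen_ord (leqnSn d) i))) (H ord_max).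
apply: is_derive_eq h _.
rewrite big_ord_recr /= big_ord_recr /= eqxx.
rewrite [RHS]addrC; congr (_ + _).
  rewrite /GRing.scale /=; congr (_ * _); apply: eq_bigr => i _.
  case: eqP => // /(congr1 val) /= E; move: (ltn_ord i); by rewrite E ltnn.
rewrite /GRing.scale /= mulr_sumr; apply: eq_bigr => i _.
rewrite big_ord_recr /= [LHS]mulrC; congr (_ * _).
  by rewrite hm.
Qed.

Section Tensor.
Variables (p d : nat) (B : 'M[R]_p).
Definition TT := {ffun 'I_d -> 'I_p}.
Definition sg (s : 'I_#|TT|) : TT := enum_val s.
Definition Wt (y : 'cV[R]_p) : 'cV[R]_#|TT| := \col_s \prod_i y (sg s i) 0.
Definition upd (f : TT) i l : TT := [ffun j => if j == i then l else f j].
Definition Lmx : 'M[R]_#|TT| := \matrix_(s, s')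
  \sum_i \sum_l B (sg s i) l * (s' == enum_rank (upd (sg s) i l))%:R.

Lemma Lmx_mul (w : 'cV[R]_#|TT|) s : (Lmx *m w) s 0 =
  \sum_i \sum_l B (sg s i) l * w (enum_rank (upd (sg s) i l)) 0.
Proof.
rewrite mxE.
under eq_bigr do rewrite mxE mulr_suml.
rewrite exchange_big /=; apply: eq_bigr => i _.
under eq_bigr do rewrite mulr_suml.
rewrite exchange_big /=; apply: eq_bigr => l _.
rewrite (bigD1 (enum_rank (upd (sg s) i l))) //= eqxx mulr1 big1 ?addr0 //.
by move=> s' /negbTE ->; rewrite mulr0 mul0r.
Qed.

Lemma Wt_derive (y : R -> 'cV[R]_p) (t : R) :
  is_derive t (1:R) y (B *m y t) ->
  is_derive t (1:R) (fun s => Wt (y s)) (Lmx *m Wt (y t)).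
Proof.
move=> /is_derive_cV H; apply/is_derive_cV => s.
have -> : (fun r => Wt (y r) s 0) = (fun r => \prod_i y r (sg s i) 0).
  by apply/funext => r; rewrite mxE.
apply: is_derive_eq.
  exact: (@is_derive_prod d (fun i r => y r (sg s i) 0) _ t (fun i => H _)).
rewrite Lmx_mul; apply: eq_bigr => i _.
rewrite (bigD1 i) //= eqxx mxE mulr_suml; apply: eq_bigr => l _.
rewrite /Wt mxE /sg enum_rankK [in RHS](bigD1 i) //= ffunE eqxx -mulrA; congr (_ * (_ * _)).
by apply: eq_bigr => j /negbTE hj; rewrite ffunE hj.
Qed.

End Tensor.

Section Mono.
Variable n' : nat.
Definition Y (x : 'cV[R]_n') : 'cV[R]_(n' + 1) := col_mx x 1%:M.

Lemma Y_last x : Y x (rshift n' ord0) 0 = 1.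
Proof. by rewrite /Y col_mxEd mxE. Qed.

Lemma Y_first x j : Y x (lshift 1 j) 0 = x j 0.
Proof. by rewrite /Y col_mxEu. Qed.

Lemma mono_rep0 k (e : 'I_n' -> nat) : (forall j, e j = 0%N) ->
  exists sg : 'I_k -> 'I_(n' + 1), forall x : 'cV[R]_n',
    \prod_j x j 0 ^+ e j = \prod_(i < k) Y x (sg i) 0.
Proof.
move=> He; exists (fun _ => rshift n' ord0) => x.
rewrite big1; last by move=> j _; rewrite He expr0.
by rewrite big1 // => i _; rewrite Y_last.
Qed.

Lemma mono_rep k (e : 'I_n' -> nat) : (\sum_j e j <= k)%N ->
  exists sg : 'I_k -> 'I_(n' + 1), forall x : 'cV[R]_n',
    \prod_j x j 0 ^+ e j = \prod_(i < k) Y x (sg i) 0.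
Proof.
elim: k e => [|k IH] e He.
  apply: mono_rep0 => j; move: He; rewrite leqn0 sum_nat_eq0 => /forallP /(_ j).
  by move/eqP.
case: (boolP [exists j, (0 < e j)%N]); last first.
  move/existsPn => H; apply: mono_rep0 => j; move: (H j); rewrite lt0n negbK.
  by move/eqP.
move/existsP => [j ej].
pose e' i := if i == j then (e j).-1 else e i.
have He' : (\sum_i e' i <= k)%N.
  have E1 : (\sum_i e i = e j + \sum_(i | i != j) e i)%N by rewrite (bigD1 j).
  have E2 : (\sum_i e' i = (e j).-1 + \sum_(i | i != j) e i)%N.
    rewrite (bigD1 j) //= /e' eqxx; congr (_ + _)%N.
    by apply: eq_bigr => i /negbTE ->.
  rewrite E2; move: He; rewrite E1; move: ej; case: (e j) => // m _ /=; rewrite addSn ltnS.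
have [sg' Hs] := IH e' He'.
exists (fun i => if unlift ord0 i is Some i' then sg' i' else lshift 1 j) => x.
rewrite big_ord_recl /= unlift_none Y_first.
under [\prod_(i < k) _]eq_bigr do rewrite liftK.
rewrite -Hs (bigD1 j) //= [in RHS](bigD1 j) //= /e' eqxx mulrA -exprS prednK //.
congr (_ * _); by apply: eq_bigr => i /negbTE ->.
Qed.

End Mono.

Lemma all_le_max (T : Type) (r : seq T) (f : T -> nat) b :
  (\max_(m <- r) f m <= b)%N -> all (fun m => f m <= b)%N r.
Proof.
elim: r => [|x r IH] //=; rewrite big_cons geq_max => /andP [h1 h2].
by rewrite h1 IH.
Qed.

Lemma poly_rep n' d (q : mpoly.mpoly n' R) :
  all (fun m => mpoly.mdeg m <= d)%N (mpoly.msupp q) ->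
  exists c : 'I_#|TT (n' + 1) d| -> R, forall x : 'cV[R]_n',
    mpoly.meval (fun j => x j 0) q = \sum_s c s * Wt d (Y x) s 0.
Proof.
move=> Hq.
have gen : forall r : seq (mpoly.multinom n'),
    all (fun m => mpoly.mdeg m <= d)%N r ->
    exists c : 'I_#|TT (n' + 1) d| -> R, forall x : 'cV[R]_n',
      \sum_(m <- r) mpoly.mcoeff m q * \prod_i x i 0 ^+ mpoly.fun_of_multinom m i
      = \sum_s c s * Wt d (Y x) s 0.
  elim => [|m r IH] /=.
    move=> _; exists (fun _ => 0) => x; rewrite big_nil big1 // => s _; by rewrite mul0r.
  move=> /andP [hm hr].
  have [c Hc] := IH hr.
  have hm' : (\sum_j mpoly.fun_of_multinom m j <= d)%N by rewrite -mpoly.mdegE.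
  have [sgm Hsg] := @mono_rep n' d (fun j => mpoly.fun_of_multinom m j) hm'.
  pose tau := enum_rank ([ffun i => sgm i] : TT (n' + 1) d).
  exists (fun s => mpoly.mcoeff m q * (s == tau)%:R + c s) => x.
  rewrite big_cons Hc.
  under [RHS]eq_bigr do rewrite mulrDl.
  rewrite big_split /=; congr (_ + _).
  rewrite [RHS](bigD1 tau) //= eqxx mulr1 [X in _ = _ + X]big1 ?addr0; last first.
    by move=> s /negbTE ->; rewrite mulr0 !mul0r.
  by rewrite Hsg /Wt mxE /sg enum_rankK; congr (_ * _); apply: eq_bigr => i _; rewrite ffunE.
have [c Hc] := gen (mpoly.msupp q) Hq.
by exists c => x; rewrite mpoly.mevalE Hc.
Qed.


Lemma lin_uniq k (M : 'M[R]_k) (y z : R -> 'cV[R]_k) :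
  (forall t, is_derive t (1:R) y (M *m y t)) ->
  (forall t, is_derive t (1:R) z (M *m z t)) -> y 0 = z 0 -> forall t, y t = z t.
Proof.
move=> Hy Hz H0 t; apply/eqP; rewrite -subr_eq0; apply/eqP.
apply: (@lin_uniq0 k M (fun s => y s - z s)); last by rewrite H0 subrr.
move=> s; have h := is_deriveB (Hy s) (Hz s).
have -> : (fun s => y s - z s) = y - z by apply/funext.
by apply: is_derive_eq h _; rewrite mulmxBr.
Qed.

Lemma main_prop (n' n'' : nat)
  (A' : 'M[R]_n') (A'' : 'M[R]_n'') (D : 'cV[R]_n')
  (g : 'cV[R]_n' -> 'cV[R]_n'') :
  polynomial_map g ->
  super_linearizable
    (fun x : 'cV[R]_(n' + n'') =>
       col_mx (A' *m usubmx x + D) (A'' *m dsubmx x + g (usubmx x))).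
Proof.
move=> [P HP].
pose d := (\max_(i < n'') \max_(m <- mpoly.msupp (P i)) mpoly.mdeg m)%N.
have hall : forall i, all (fun m => mpoly.mdeg m <= d)%N (mpoly.msupp (P i)) :=
  fun i => all_le_max (@leq_bigmax _ (fun i => (\max_(m <- mpoly.msupp (P i)) mpoly.mdeg m)%N) i).
pose K := #|TT (n' + 1) d|.
have [Cf HC] := boolp.choice (fun i => poly_rep (hall i)).
pose C : 'M[R]_(n'', K) := \matrix_(i, s) Cf i s.
have gC : forall x, g x = C *m Wt d (Y x).
  move=> x; apply/matrixP => i j; rewrite (ord1 j) HP HC mxE.
  by rewrite /C; under [RHS]eq_bigr => s _ do rewrite mxE.
pose B : 'M[R]_(n' + 1) := block_mx A' D 0 0.
pose L := Lmx d B.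
pose tc : 'I_K := enum_rank ([ffun _ => rshift n' ord0] : TT (n' + 1) d).
have Wtc : forall x, Wt d (Y x) tc 0 = 1.
  move=> x; rewrite /Wt mxE /sg enum_rankK; apply: big1 => i _.
  by rewrite ffunE Y_last.
have Ltc : forall v : 'cV[R]_K, (L *m v) tc 0 = 0.
  move=> v; rewrite /L Lmx_mul; apply: big1 => i _; apply: big1 => l _.
  by rewrite /sg enum_rankK ffunE /B block_mxEv col_mxEd row_mx0 mxE mul0r.
have BY : forall x, B *m Y x = col_mx (A' *m x + D) 0.
  by move=> x; rewrite /B /Y mul_block_col mulmx1 !mul0mx addr0.
pose E : 'M[R]_(1, K) := delta_mx 0 tc.
have Ew : forall w : 'cV[R]_K, w tc 0 = 1 -> E *m w = 1%:M.
  move=> w hw; apply/matrixP => i j; rewrite (ord1 i) (ord1 j) -rowE !mxE hw.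
  by [].
pose nn := (n' + n'')%N.
pose Am : 'M[R]_(nn + (nn + K)) :=
  block_mx (block_mx A' 0 0 A'') (row_mx (0 : 'M[R]_(nn, nn)) (col_mx (D *m E) C))
           0 (block_mx (0 : 'M[R]_nn) 0 0 L).
have Aform : forall (x1 : 'cV[R]_n') (x2 : 'cV[R]_n'') (c : 'cV[R]_nn) (w : 'cV[R]_K),
    Am *m col_mx (col_mx x1 x2) (col_mx c w) =
    col_mx (col_mx (A' *m x1 + D *m (E *m w)) (A'' *m x2 + C *m w)) (col_mx 0 (L *m w)).
  move=> x1 x2 c w.
  rewrite /Am mul_block_col mul_row_col mul_block_col mul_col_mx mul_block_col.
  rewrite !mul0mx ?addr0 ?add0r add_col_mx ?add0r ?addr0 mulmxA ?col_mx0.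
  by [].
pose p (x : 'cV[R]_nn) : 'cV[R]_(nn + K) := col_mx x (Wt d (Y (usubmx x))).
exists (nn + K)%N, Am, 0, p; split.
  by move=> x y /(congr1 usubmx); rewrite !col_mxKu.
move=> x0.
pose z0 := col_mx x0 (p x0).
have [z [Hz0 Hz]] := lin_exist Am z0.
pose x1 s := usubmx (usubmx (z s)).
pose x2 s := dsubmx (usubmx (z s)).
pose cc s := usubmx (dsubmx (z s)).
pose w s := dsubmx (dsubmx (z s)).
have zE : forall s, z s = col_mx (col_mx (x1 s) (x2 s)) (col_mx (cc s) (w s)).
  by move=> s; rewrite !vsubmxK.
have dz : forall s, Am *m z s = col_mx (col_mx (A' *m x1 s + D *m (E *m w s))
    (A'' *m x2 s + C *m w s)) (col_mx 0 (L *m w s)).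
  by move=> s; rewrite zE Aform.
have dw : forall s, is_derive s (1:R) w (L *m w s).
  move=> s; have := is_derive_dsub (is_derive_dsub (Hz s)).
  by rewrite dz !col_mxKd.
have dcc : forall s, is_derive s (1:R) cc 0.
  move=> s; have := is_derive_usub (is_derive_dsub (Hz s)).
  by rewrite dz col_mxKd col_mxKu.
have dx1 : forall s, is_derive s (1:R) x1 (A' *m x1 s + D *m (E *m w s)).
  move=> s; have := is_derive_usub (is_derive_usub (Hz s)).
  by rewrite dz !col_mxKu.
have dx12 : forall s, is_derive s (1:R) (fun r => usubmx (z r))
    (col_mx (A' *m x1 s + D *m (E *m w s)) (A'' *m x2 s + C *m w s)).
  move=> s; have := is_derive_usub (Hz s).
  by rewrite dz !col_mxKu.
have z0E : z 0 = col_mx (col_mx (usubmx x0) (dsubmx x0))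
    (col_mx x0 (Wt d (Y (usubmx x0)))).
  by rewrite Hz0 /z0 /p vsubmxK.
have wtc : forall s, w s tc 0 = 1.
  move=> s.
  have h : forall r, is_derive r (1:R) (fun r => w r tc 0) 0.
    by move=> r; have := (is_derive_cV _ _ _).1 (dw r) tc; rewrite Ltc.
  have := is_derive_0_is_cst s 0 h; rewrite /= => ->.
  by rewrite /w z0E !col_mxKd Wtc.
have dY : forall s, is_derive s (1:R) (fun r => Y (x1 r)) (B *m Y (x1 s)).
  move=> s; apply: is_derive_eq.
    exact: (is_derive_col (dx1 s) (is_derive_cst (1%:M : 'cV[R]_1) s 1)).
  by rewrite BY (Ew _ (wtc s)) mulmx1.
have wW : forall s, w s = Wt d (Y (x1 s)).
  apply: (@lin_uniq _ L) => //.
    move=> s; exact: (Wt_derive d (dY s)).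
  by rewrite /w /x1 z0E !col_mxKd !col_mxKu.
exists z; split.
  split; first split.
  - exact: Hz0.
  - by move=> t; rewrite addr0.
  move=> y [Hy0 Hy]; apply: (@lin_uniq _ Am) => //.
    by move=> t; have := Hy t; rewrite addr0.
  by rewrite Hy0.
split; first split.
- by rewrite /= Hz0 /z0 col_mxKu.
- move=> t; have := dx12 t.
  rewrite (Ew _ (wtc t)) mulmx1 wW -gC.
  have -> : usubmx (z t) = col_mx (x1 t) (x2 t) by rewrite /x1 /x2 vsubmxK.
  by rewrite col_mxKu col_mxKd.
move=> y [Hy0 Hy] t.
pose zh s := col_mx (y s) (col_mx x0 (Wt d (Y (usubmx (y s))))).
have dYy : forall s, is_derive s (1:R) (fun r => Y (usubmx (y r))) (B *m Y (usubmx (y s))).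
  move=> s; apply: is_derive_eq.
    apply: (is_derive_col _ (is_derive_cst (1%:M : 'cV[R]_1) s 1)).
    exact: (is_derive_usub (Hy s)).
  by rewrite BY col_mxKu.
have Hzh : forall s, is_derive s (1:R) zh (Am *m zh s).
  move=> s.
  have hz := is_derive_col (Hy s) (is_derive_col (is_derive_cst x0 s 1) (Wt_derive d (dYy s))).
  apply: is_derive_eq hz _.
  have -> : zh s = col_mx (col_mx (usubmx (y s)) (dsubmx (y s)))
      (col_mx x0 (Wt d (Y (usubmx (y s))))) by rewrite /zh vsubmxK.
  by rewrite Aform (Ew _ (Wtc _)) mulmx1 -gC.
have h0 : zh 0 = z 0 by rewrite /zh Hy0 Hz0.
have Ezh := lin_uniq Hzh Hz h0 t.
have : usubmx (zh t) = usubmx (z t) by rewrite Ezh.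
by rewrite /zh col_mxKu.
Qed.

End S.

Theorem proposition1 (R : realType) (n' n'' : nat)
  (A' : 'M[R]_n') (A'' : 'M[R]_n'') (D : 'cV[R]_n')
  (g : 'cV[R]_n' -> 'cV[R]_n'') :
  polynomial_map g ->
  super_linearizable
    (fun x : 'cV[R]_(n' + n'') =>
       col_mx (A' *m usubmx x + D) (A'' *m dsubmx x + g (usubmx x))).
Proof. exact: main_prop. Qed.
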